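(* Suppose $n\ge 2$ and $k\ge 4$, and let ${\bf a}_1,\ldots,{\bf a}_k$ be sequences of positive integers each with sum at most $n$. Then the multiple flag variety $M_{{\bf a}_1}\times\cdots\times M_{{\bf a}_k}$ has infinitely many orbits under the diagonal action of $G$.
   Context: $\mathbb F$ is an infinite field of characteristic $\ne 2$. Equip $\mathbb F^{2n}$ (canonical basis $e_1,\ldots,e_{2n}$) with the symmetric bilinear form $(e_i,e_j)=\delta_{i,2n+1-j}$, and let $G={\rm O}_{2n}(\mathbb F)$ be its isometry group in ${\rm GL}_{2n}(\mathbb F)$. A subspace $V$ is isotropic if $(V,V)=\{0\}$. For a sequence ${\bf a}=(\alpha_1,\ldots,\alpha_p)$ of positive integers with $\alpha_1+\cdots+\alpha_p\le n$, $M_{\bf a}$ is the set of flags $V_1\subset\cdots\subset V_p$ of subspaces of $\mathbb F^{2n}$ with $\dim V_j=\alpha_1+\cdots+\alpha_j$ and $V_p$ isotropic; $G$ acts on the product diagonally. *)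

(* Defs.v *)
From HB Require Import structures.
From mathcomp Require Import all_boot all_order all_algebra.
Set Implicit Arguments. Unset Strict Implicit. Unset Printing Implicit Defensive.
Import GRing.Theory.
Local Open Scope ring_scope.

(* Vectors of F^{2n} are row vectors 'rV[F]_(n.*2); the basis vector e_(i+1)
   is the i-th unit row (0-indexed).  A subspace is represented by a matrix
   whose row space is that subspace; subspaces are compared with (_ == _)%MS. *)

(* Gram matrix of the form (e_i, e_j) = delta_{i, 2n+1-j}; 0-indexed: i+j = 2n-1 *)
Definition Jform (F : fieldType) (n : nat) : 'M[F]_(n.*2) :=
  \matrix_(i, j) (((i : nat) + j == n.*2.-1)%N)%:R.

Definition in_O2n (F : fieldType) (n : nat) (g : 'M[F]_(n.*2)) : Prop :=
  g \in unitmx /\ g *m Jform F n *m g^T = Jform F n.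

Definition isotropic (F : fieldType) (n m : nat) (V : 'M[F]_(m, n.*2)) : Prop :=
  V *m Jform F n *m V^T = 0.

Definition is_flag (F : fieldType) (n : nat) (a : seq nat)
    (V : 'I_(size a) -> 'M[F]_(n.*2)) : Prop :=
  (forall j : 'I_(size a), \rank (V j) = (\sum_(l < size a | (l <= j)%N) nth 0%N a l)%N)
  /\ (forall j1 j2 : 'I_(size a), (j1 <= j2)%N -> (V j1 <= V j2)%MS)
  /\ (forall j : 'I_(size a), (j.+1 = size a)%N -> isotropic (V j)).

Definition multiflag_pt (F : fieldType) (n k : nat) (a : 'I_k -> seq nat) :=
  forall i : 'I_k, 'I_(size (a i)) -> 'M[F]_(n.*2).

Definition is_multiflag (F : fieldType) (n k : nat) (a : 'I_k -> seq nat)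
    (x : multiflag_pt F n a) : Prop :=
  forall i : 'I_k, is_flag (x i).

Definition same_orbit (F : fieldType) (n k : nat) (a : 'I_k -> seq nat)
    (x y : multiflag_pt F n a) : Prop :=
  exists g : 'M[F]_(n.*2), in_O2n g /\
    forall (i : 'I_k) (j : 'I_(size (a i))), (x i j *m g == y i j)%MS.

Definition finitely_many_orbits (F : fieldType) (n k : nat) (a : 'I_k -> seq nat) : Prop :=
  exists (N : nat) (r : 'I_N -> multiflag_pt F n a),
    forall x : multiflag_pt F n a, is_multiflag x ->
      exists t : 'I_N, same_orbit x (r t).

Definition admissible (n : nat) (s : seq nat) : Prop :=
  (0 < size s)%N /\ all (fun x => 0 < x)%N s /\ (sumn s <= n)%N.

(* Main.v *)
Require Import Defs.
From HB Require Import structures.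
From mathcomp Require Import all_boot all_order all_algebra.
From mathcomp Require Import ring zify.
From Stdlib Require Import ClassicalEpsilon.
Unset Strict Implicit. Unset Printing Implicit Defensive.
Import GRing.Theory.
Local Open Scope ring_scope.

Lemma count_sum (T : eqType) N (f : T -> 'I_N) (s : seq T) :
  size s = (\sum_(m < N) count (fun x => f x == m) s)%N.
Proof.
elim: s => [|x s IH] /=; first by rewrite big1.
rewrite big_split /= -IH (bigD1 (f x)) //= eqxx big1 ?addn0 // => m hm.
by rewrite eq_sym (negbTE hm).
Qed.

Lemma pig3 (T : eqType) N (f : T -> 'I_N) (s : seq T) :
  uniq s -> (2 * N < size s)%N ->
  exists x1 x2 x3, [/\ x1 != x2, x1 != x3, x2 != x3 & f x1 = f x2 /\ f x1 = f x3].
Proof.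
move=> hu hs.
have [m hm] : exists m : 'I_N, (2 < count (fun x => f x == m) s)%N.
  case: (pickP (fun m : 'I_N => 2 < count (fun x => f x == m) s)%N) => [m hm|hc]; first by exists m.
  move: hs; rewrite (count_sum _ _ f).
  have : (\sum_(m < N) count (fun x => f x == m) s <= \sum_(m < N) 2)%N.
    by apply: leq_sum => m _; move: (hc m) => /= /negbT; rewrite -leqNgt.
  rewrite sum_nat_const card_ord; lia.
have hu' : uniq (filter (fun x => f x == m) s) by apply: filter_uniq.
have hall : forall x, x \in filter (fun x => f x == m) s -> f x = m.
  by move=> x; rewrite mem_filter => /andP [/eqP] .
move: hm hu' hall; rewrite -size_filter.
case: (filter _ s) => [|x1 [|x2 [|x3 t]]] //= _.
move=> /andP [h1 /andP [h2 _]] hall.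
have h12 : x1 != x2 by apply: contraNneq h1 => ->; rewrite inE eqxx.
have h13 : x1 != x3 by apply: contraNneq h1 => ->; rewrite !inE eqxx orbT.
have h23 : x2 != x3 by apply: contraNneq h2 => ->; rewrite inE eqxx.
exists x1, x2, x3; split => //.
by rewrite (hall x1) ?(hall x2) ?(hall x3) ?inE ?eqxx ?orbT.
Qed.

Section Work.
Variable F : fieldType.
Variable n : nat.
Hypothesis hn : (2 <= n)%N.

Lemma sumd {m x : nat} (f : 'I_m -> F) (hx : (x < m)%N) :
  \sum_(q < m) ((q : nat) == x)%:R * f q = f (Ordinal hx).
Proof.
rewrite (bigD1 (Ordinal hx)) //= eqxx mul1r big1 ?addr0 // => q hq.
case: eqP => [e|]; last by rewrite mul0r.
by move: hq; rewrite (_ : q = Ordinal hx) ?eqxx //; apply: val_inj.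
Qed.

Definition J := Jform F n.
Definition iota (a : 'I_4) : nat :=
  match val a with 0 => 0 | 1 => n.-1 | 2 => n | _ => n.*2.-1 end%N.
Definition Pm : 'M[F]_(4, n.*2) := \matrix_(a, q) ((q : nat) == iota a)%:R.
Definition J4 : 'M[F]_4 := \matrix_(i, j) (((i:nat) + j == 3)%N)%:R.
Definition embed (h : 'M[F]_4) : 'M[F]_(n.*2) := 1%:M + Pm^T *m (h - 1%:M) *m Pm.

Lemma iota_lt a : (iota a < n.*2)%N.
Proof. by case: a => [[|[|[|[|m]]]] hm] //; rewrite /iota /=; lia. Qed.

Lemma iota_inj a b : iota a = iota b -> a = b.
Proof.
move=> e; apply: val_inj; move: e.
rewrite /iota; case: a => [[|[|[|[|m]]]] hm] //=; case: b => [[|[|[|[|m']]]] hm'] //=; lia.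
Qed.

Lemma iota_rev a : iota (rev_ord a) = (n.*2.-1 - iota a)%N.
Proof. rewrite /iota; case: a => [[|[|[|[|m]]]] hm] //=; lia. Qed.

Lemma PPt : Pm *m Pm^T = 1%:M.
Proof.
apply/matrixP => a b; rewrite !mxE.
under eq_bigr => q _ do rewrite !mxE.
rewrite (sumd (fun q : 'I_(n.*2) => ((q:nat) == iota b)%:R) (iota_lt a)) /=.
case: (eqVneq a b) => [->|nab]; first by rewrite eqxx.
by case: eqP => // /iota_inj e; rewrite e eqxx in nab.
Qed.

Lemma Jsym : J^T = J.
Proof. by apply/matrixP => i j; rewrite !mxE addnC. Qed.

Lemma J4sym : J4^T = J4.
Proof. by apply/matrixP => i j; rewrite !mxE addnC. Qed.

Lemma JE (i j : 'I_(n.*2)) : J i j = ((j : nat) == n.*2.-1 - i)%N%:R.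
Proof.
rewrite !mxE; congr (_%:R); apply/eqP/eqP; have := ltn_ord i; have := ltn_ord j; lia.
Qed.

Lemma JJ : J *m J = 1%:M.
Proof.
apply/matrixP => i j; rewrite !mxE.
under eq_bigr => q _ do rewrite JE.
have hl : (n.*2.-1 - i < n.*2)%N by have := ltn_ord i; lia.
rewrite (sumd (fun q : 'I_(n.*2) => J q j) hl) JE /=.
congr (_%:R); have := ltn_ord i; have := ltn_ord j; move=> hj hi.
rewrite (_ : (n.*2.-1 - (n.*2.-1 - i))%N = i); first by rewrite eq_sym.
lia.
Qed.

Lemma PJ : Pm *m J = J4 *m Pm.
Proof.
apply/matrixP => a q; rewrite !mxE.
under eq_bigr => k _ do rewrite !mxE.
rewrite (sumd (fun k : 'I_(n.*2) => (((k:nat) + q)%N == n.*2.-1)%:R) (iota_lt a)) /=.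
under [RHS]eq_bigr => b _ do rewrite !mxE.
have hb : (3 - a < 4)%N by lia.
rewrite (@eq_bigr _ _ _ _ _ _ _ (fun b : 'I_4 => (((b:nat) == 3 - a)%N)%:R * (((q:nat) == iota b)%N)%:R)); last first.
  move=> b _; rewrite (_ : (((a:nat) + b)%N == 3%N) = ((b:nat) == 3 - a)%N) //.
  by apply/eqP/eqP; have := ltn_ord b; have := ltn_ord a; lia.
rewrite (sumd (fun b : 'I_4 => (((q:nat) == iota b)%N)%:R) hb) /=.
congr (_%:R); have := iota_rev a; rewrite /rev_ord /=.
move: (iota_lt a) (ltn_ord q) => h1 h2.
have -> : Ordinal (rev_ord_proof a) = Ordinal hb by apply: val_inj.
move=> ->; apply/eqP/eqP; lia.
Qed.


Lemma JPt : J *m Pm^T = Pm^T *m J4.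
Proof. by rewrite -[J]Jsym -[J4]J4sym -!trmx_mul PJ. Qed.

Lemma PJPt : Pm *m J *m Pm^T = J4.
Proof. by rewrite PJ -mulmxA PPt mulmx1. Qed.

Lemma PPtl m (X : 'M[F]_(m, 4)) : X *m Pm *m Pm^T = X.
Proof. by rewrite -mulmxA PPt mulmx1. Qed.

Lemma JPtl m (X : 'M[F]_(m, n.*2)) : X *m J *m Pm^T = X *m Pm^T *m J4.
Proof. by rewrite -mulmxA JPt mulmxA. Qed.

Lemma gram0 (A B : 'M[F]_4) :
  (1%:M + Pm^T *m A *m Pm) *m J *m (1%:M + Pm^T *m B *m Pm)^T
  = J + Pm^T *m (A *m J4 + J4 *m B^T + A *m J4 *m B^T) *m Pm.
Proof.
rewrite linearD /= ?trmx1 !trmx_mul trmxK.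
rewrite !(mulmxDl, mulmxDr, mulmx1, mul1mx) !mulmxA ?JPt ?JPtl ?PPtl ?JPtl.
rewrite -!mulmxA ?PJ !mulmxA ?PPtl.
by rewrite -!addrA; congr (_ + _); apply: addrCA.
Qed.

Definition Cm (h h' : 'M[F]_4) := h *m J4 *m h'^T.

Lemma cm_expand (A B : 'M[F]_4) :
  Cm (1%:M + A) (1%:M + B) - J4 = A *m J4 + J4 *m B^T + A *m J4 *m B^T.
Proof.
rewrite /Cm linearD /= trmx1 !(mulmxDl, mulmxDr, mulmx1, mul1mx).
move: (J4 *m B^T) (A *m J4) (A *m J4 *m B^T) => X Y Z.
by rewrite addrAC -!addrA [X + _]addrCA addrA subrr add0r addrCA.
Qed.

Lemma gram (h h' : 'M[F]_4) :
  embed h *m J *m (embed h')^T = J + Pm^T *m (Cm h h' - J4) *m Pm.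
Proof.
rewrite /embed gram0; congr (_ + _ *m _ *m _).
have e : forall x : 'M[F]_4, 1%:M + (x - 1%:M) = x by move=> x; rewrite addrC subrK.
by rewrite -cm_expand !e.
Qed.

Lemma embed_iso {h : 'M[F]_4} : h *m J4 *m h^T = J4 -> in_O2n (embed h).
Proof.
move=> hh; have g : embed h *m J *m (embed h)^T = J.
  by rewrite gram /Cm hh subrr mulmx0 mul0mx addr0.
split=> //.
have : embed h *m (J *m (embed h)^T *m J) = 1%:M by rewrite !mulmxA g JJ.
by case/mulmx1_unit.
Qed.


Lemma pidJpid (D D' : nat) : (D <= n)%N -> (D' <= n)%N ->
  pid_mx D *m J *m pid_mx D' = 0 :> 'M[F]_(n.*2).
Proof.
move=> hD hD'; apply/matrixP => i j; rewrite !mxE.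
under eq_bigr => l _ do rewrite !mxE.
under eq_bigr => l _ do under eq_bigr => m _ do rewrite !mxE.
apply: big1 => l _; rewrite big_distrl /=; apply: big1 => m _.
case: eqP => [e1|_]; last by rewrite !mul0r.
case hi: (i < D)%N; first last. by rewrite !mul0r.
case hl: (l < D')%N; last by rewrite andbF mulr0.
rewrite (_ : ((m + l)%N == n.*2.-1) = false) ?mulr0 ?mul0r //.
apply/negbTE/eqP; move: hi hl e1; lia.
Qed.

Variable k : nat.
Variable a : 'I_k -> seq nat.
Hypothesis ha : forall i, admissible n (a i).

Definition Dsum (i : 'I_k) (j : nat) : nat :=
  (\sum_(l < size (a i) | (l <= j)%N) nth 0%N (a i) l)%N.

Definition cfg (hh : 'I_k -> 'M[F]_4) : multiflag_pt F n a :=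
  fun i j => pid_mx (Dsum i j) *m embed (hh i).

Lemma Dsum_le i j : (Dsum i j <= n)%N.
Proof.
case: (ha i) => _ [_ hs]; apply: leq_trans hs.
rewrite /Dsum sumnE (big_nth 0%N) big_mkord.
rewrite [X in (_ <= X)%N](bigID (fun l : 'I_(size (a i)) => (l <= j)%N)) /=.
exact: leq_addr.
Qed.

Lemma Dsum_mono {i j1 j2} : (j1 <= j2)%N -> (Dsum i j1 <= Dsum i j2)%N.
Proof.
move=> h; rewrite /Dsum !(big_mkcond (fun l : 'I__ => (l <= _)%N)) /=.
apply: leq_sum => l _; case: ifP => // hl; rewrite (leq_trans hl h) //.
Qed.

Lemma cfg_flag {hh} : (forall i, Cm (hh i) (hh i) = J4) -> is_multiflag (cfg hh).
Proof.
move=> hiso i; have [hu hJ] := embed_iso (hiso i).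
split; [|split].
- move=> j; rewrite /cfg mxrankMfree ?row_free_unit // rank_pid_mx //.
  + by apply: leq_trans (Dsum_le i j) _; lia.
  + by apply: leq_trans (Dsum_le i j) _; lia.
- move=> j1 j2 hj; rewrite /cfg.
  have -> : (pid_mx (Dsum i j1) : 'M[F]_(n.*2)) =
     (pid_mx (Dsum i j1) : 'M[F]_(n.*2)) *m (pid_mx (Dsum i j2) : 'M[F]_(n.*2)).
    rewrite mul_pid_mx; congr pid_mx.
    have := @Dsum_mono i _ _ hj; have := Dsum_le i j2; lia.
  by rewrite -mulmxA submxMl.
- move=> j _; rewrite /isotropic /cfg trmx_mul tr_pid_mx.
  rewrite -!mulmxA [embed _ *m (_ *m _)]mulmxA [embed _ *m _ *m _]mulmxA -/J.
  by rewrite hJ !mulmxA pidJpid ?Dsum_le.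
Qed.


Lemma entry_row m p (A : 'M[F]_(m, p)) (M : 'M[F]_p) a4 b4 :
  (A *m M *m A^T) a4 b4 = (row a4 A *m M *m (row b4 A)^T) 0 0.
Proof.
rewrite !mxE; apply: eq_bigr => l _; rewrite !mxE; congr (_ * _).
by apply: eq_bigr => q _; rewrite !mxE.
Qed.

Lemma PGPt (h h' : 'M[F]_4) : Pm *m (embed h *m J *m (embed h')^T) *m Pm^T = Cm h h'.
Proof.
rewrite gram [Pm *m (_ + _)]mulmxDr [(_ + _) *m Pm^T]mulmxDl PJPt.
rewrite !mulmxA PPt mul1mx PPtl.
by rewrite addrC subrK.
Qed.

Lemma rowP_pid {a4 : 'I_4} {D} : (iota a4 < D)%N ->
  row a4 Pm *m pid_mx D = row a4 Pm :> 'rV[F]_(n.*2).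
Proof.
move=> hD; apply/matrixP => i c; rewrite !mxE.
under eq_bigr => q _ do rewrite !mxE.
rewrite (sumd (fun q : 'I_(n.*2) => ((q == c :> nat) && (q < D)%N)%:R) (iota_lt a4)) /=.
by rewrite hD andbT eq_sym.
Qed.

Lemma zeta0 (z : 'rV[F]_(n.*2)) D (c : 'I_4) : ~~ (iota c < D)%N ->
  (z *m pid_mx D *m Pm^T) 0 c = 0.
Proof.
move=> hc; rewrite mxE.
rewrite (@eq_bigr _ _ _ _ _ _ _ (fun q : 'I_(n.*2) => ((q:nat) == iota c)%:R * (z *m pid_mx D) 0 q)); last first.
  by move=> q _; rewrite [Pm^T _ _]mxE [Pm _ _]mxE mulrC.
rewrite (sumd (fun q => (z *m pid_mx D) 0 q) (iota_lt c)) !mxE.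
apply: big1 => l _; rewrite !mxE /=; case: eqP => [e|_]; last by rewrite mulr0.
by rewrite e (negbTE hc) mulr0.
Qed.

Section Key.
Variables ht hs : 'I_k -> 'M[F]_4.
Variable g : 'M[F]_(n.*2).
Hypothesis hg : in_O2n g.
Hypothesis horb : forall (i : 'I_k) (j : 'I_(size (a i))), (cfg ht i j *m g == cfg hs i j)%MS.

Lemma key_z (i : 'I_k) (j : 'I_(size (a i))) (a4 : 'I_4) : (iota a4 < Dsum i j)%N ->
  exists z : 'rV[F]_(n.*2), row a4 Pm *m embed (ht i) *m g = z *m pid_mx (Dsum i j) *m embed (hs i).
Proof.
move=> hD.
have h1 : (row a4 Pm *m embed (ht i) <= cfg ht i j)%MS.
  by rewrite /cfg -(rowP_pid hD) -mulmxA submxMl.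
have h2 : (row a4 Pm *m embed (ht i) *m g <= cfg hs i j)%MS.
  by apply: submx_trans (submxMr g h1) _; move/eqmxP: (horb i j) => ->.
case/submxP: h2 => z ->; exists z; by rewrite /cfg mulmxA.
Qed.

Lemma key_pair (i i' : 'I_k) (D D' : nat) (a4 b4 : 'I_4) (z z' : 'rV[F]_(n.*2)) :
  (D <= n)%N -> (D' <= n)%N ->
  row a4 Pm *m embed (ht i) *m g = z *m pid_mx D *m embed (hs i) ->
  row b4 Pm *m embed (ht i') *m g = z' *m pid_mx D' *m embed (hs i') ->
  Cm (ht i) (ht i') a4 b4 =
  ((z *m pid_mx D *m Pm^T) *m (Cm (hs i) (hs i') - J4) *m (z' *m pid_mx D' *m Pm^T)^T) 0 0.
Proof.
move=> hD hD' e1 e2.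
rewrite -PGPt entry_row.
have gJ : forall m (X : 'M[F]_(m, n.*2)), X *m g *m J *m g^T = X *m J.
  by case: hg => _ hJ m X; rewrite -!mulmxA [g *m (J *m _)]mulmxA hJ.
have -> : row a4 Pm *m (embed (ht i) *m J *m (embed (ht i'))^T) *m (row b4 Pm)^T
   = (row a4 Pm *m embed (ht i) *m g) *m J *m (row b4 Pm *m embed (ht i') *m g)^T.
  by rewrite !trmx_mul !mulmxA gJ.
rewrite e1 e2.
have -> : z *m pid_mx D *m embed (hs i) *m J *m (z' *m pid_mx D' *m embed (hs i'))^T
  = (z *m pid_mx D) *m (embed (hs i) *m J *m (embed (hs i'))^T) *m (z' *m pid_mx D')^T.
  by rewrite !trmx_mul !mulmxA.
rewrite gram; set G := Pm^T *m _ *m Pm.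
have -> : z *m pid_mx D *m (J + G) *m (z' *m pid_mx D')^T
   = z *m pid_mx D *m G *m (z' *m pid_mx D')^T.
  rewrite mulmxDr mulmxDl.
  have -> : z *m pid_mx D *m J *m (z' *m pid_mx D')^T = 0.
    rewrite trmx_mul tr_pid_mx !mulmxA -[z *m pid_mx D *m J]mulmxA -[z *m (pid_mx D *m J) *m _]mulmxA.
    by rewrite pidJpid // mulmx0 mul0mx.
  by rewrite add0r.
by rewrite /G !trmx_mul trmxK !mulmxA.
Qed.

Definition Vdat (i : 'I_k) D (a4 : 'I_4) (u : 'rV[F]_4) :=
  exists z : 'rV[F]_(n.*2), row a4 Pm *m embed (ht i) *m g = z *m pid_mx D *m embed (hs i)
     /\ u = z *m pid_mx D *m Pm^T.

Lemma vert (i : 'I_k) (j : 'I_(size (a i))) (a4 : 'I_4) : (iota a4 < Dsum i j)%N ->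
  exists u, Vdat i (Dsum i j) a4 u.
Proof.
move=> h; have [z ez] := key_z i j a4 h.
by exists (z *m pid_mx (Dsum i j) *m Pm^T), z.
Qed.

Lemma vert_zero i D a4 u : (D <= n)%N -> Vdat i D a4 u ->
  [/\ u 0 (@Ordinal 4 2 isT) = 0, u 0 (@Ordinal 4 3 isT) = 0 &
      ((D < n)%N -> u 0 (@Ordinal 4 1 isT) = 0)].
Proof.
move=> hD [z [_ ->]]; split; try (move=> ?); apply: zeta0; rewrite /iota /=; lia.
Qed.

Lemma edge i i' D D' a4 b4 u u' : (D <= n)%N -> (D' <= n)%N ->
  Vdat i D a4 u -> Vdat i' D' b4 u' ->
  Cm (ht i) (ht i') a4 b4 = (u *m (Cm (hs i) (hs i') - J4) *m u'^T) 0 0.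
Proof.
move=> hD hD' [z [e1 ->]] [z' [e2 ->]]; exact: key_pair hD hD' e1 e2.
Qed.

End Key.


Lemma iso_inv (g : 'M[F]_(n.*2)) : in_O2n g -> in_O2n (invmx g).
Proof.
case=> hu hJ; split; first by rewrite unitmx_inv.
have hut : g^T \in unitmx by rewrite unitmx_tr.
rewrite -{1}hJ !mulmxA mulVmx // mul1mx -mulmxA trmx_inv mulmxV // mulmx1.
by rewrite -/J.
Qed.

Lemma iso_mul (g1 g2 : 'M[F]_(n.*2)) : in_O2n g1 -> in_O2n g2 -> in_O2n (g1 *m g2).
Proof.
case=> hu1 hJ1 [hu2 hJ2]; split; first by rewrite unitmx_mul hu1.
rewrite trmx_mul !mulmxA -(mulmxA g1 g2) -(mulmxA g1 (g2 *m _)) hJ2.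
by rewrite hJ1.
Qed.

Lemma orbit_comb {x y r : multiflag_pt F n a} : same_orbit x r -> same_orbit y r ->
  exists g, in_O2n g /\ forall (i : 'I_k) (j : 'I_(size (a i))), (x i j *m g == y i j)%MS.
Proof.
case=> g1 [hg1 h1] [g2 [hg2 h2]]; exists (g1 *m invmx g2); split.
  by apply: iso_mul => //; apply: iso_inv.
move=> i j; apply/eqmxP.
have hu2 : g2 \in unitmx by case: hg2.
move/eqmxP: (h1 i j) => /(eqmxMr (invmx g2)) e1.
move/eqmxP: (h2 i j) => /(eqmxMr (invmx g2)); rewrite mulmxK // => e2.
by rewrite mulmxA; apply: eqmx_trans e1 (eqmx_sym e2).
Qed.


Lemma reduction (ht : F -> 'I_k -> 'M[F]_4) (Rel : F -> F -> Prop) :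
  (forall s : seq F, exists x, x \notin s) ->
  (forall t i, Cm (ht t i) (ht t i) = J4) ->
  (forall t s g, in_O2n g ->
     (forall (i : 'I_k) (j : 'I_(size (a i))), (cfg (ht t) i j *m g == cfg (ht s) i j)%MS) ->
     Rel t s) ->
  (forall t1 t2 t3, t1 != t2 -> t1 != t3 -> t2 != t3 -> Rel t1 t2 -> Rel t1 t3 -> Rel t2 t3 -> False) ->
  ~ finitely_many_orbits F n a.
Proof.
move=> hinf hiso hrel h3 [N [r hr]].
have hex : forall t, exists m : 'I_N, same_orbit (cfg (ht t)) (r m).
  by move=> t; apply: hr; apply: cfg_flag.
pose f t := proj1_sig (constructive_indefinite_description _ (hex t)).
have hf : forall t, same_orbit (cfg (ht t)) (r (f t)).
  by move=> t; rewrite /f; case: constructive_indefinite_description.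
have [s [hu hs]] : exists s : seq F, uniq s /\ size s = (2 * N).+1.
  elim: (2 * N).+1 => [|m [s [hu hs]]]; first by exists [::].
  have [x hx] := hinf s; exists (x :: s); by rewrite /= hx hu hs.
have [t1 [t2 [t3 [h12 h13 h23 [e12 e13]]]]] : exists x1 x2 x3,
    [/\ x1 != x2, x1 != x3, x2 != x3 & f x1 = f x2 /\ f x1 = f x3].
  by apply: (pig3 _ _ f s hu); rewrite hs.
have R : forall u v, f u = f v -> Rel u v.
  move=> u v e; have hv := hf v; rewrite -e in hv.
  have [g [hg ho]] := orbit_comb (hf u) hv.
  exact: hrel hg ho.
exact: h3 h12 h13 h23 (R _ _ e12) (R _ _ e13) (R _ _ (etrans (esym e12) e13)).
Qed.


Local Notation o0 := (@Ordinal 4 0 isT).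
Local Notation o1 := (@Ordinal 4 1 isT).
Local Notation o2 := (@Ordinal 4 2 isT).
Local Notation o3 := (@Ordinal 4 3 isT).


Definition hXf (x : F) (i j : nat) : F :=
  match i, j with
  | 0%N, 0%N => 1 | 0%N, 1%N => x | 1%N, 2%N => 1 | 1%N, 3%N => - x | 2%N, 1%N => 1 | 3%N, 3%N => 1
  | _, _ => 0 end.
Definition hYf (x : F) (i j : nat) : F :=
  match i, j with
  | 1%N, 0%N => 1 | 1%N, 1%N => x | 0%N, 2%N => 1 | 0%N, 3%N => - x | 3%N, 1%N => 1 | 2%N, 3%N => 1
  | _, _ => 0 end.
Definition hX (x : F) : 'M[F]_4 := \matrix_(i, j) hXf x i j.
Definition hY (x : F) : 'M[F]_4 := \matrix_(i, j) hYf x i j.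

Lemma sum4 (G : 'I_4 -> F) : \sum_(i < 4) G i = G o0 + G o1 + G o2 + G o3.
Proof.
rewrite !big_ord_recr big_ord0 /= ?add0r; repeat congr (_ + _); congr G; exact: val_inj.
Qed.

Lemma CmE (h h' : 'M[F]_4) i j :
  Cm h h' i j = h i o0 * h' j o3 + h i o1 * h' j o2 + h i o2 * h' j o1 + h i o3 * h' j o0.
Proof.
rewrite /Cm mxE sum4 !mxE !sum4 !mxE /=.
ring.
Qed.



Ltac ord4 i := case: i => [[|[|[|[|?]]]] ?] //.

Lemma hX_iso x : Cm (hX x) (hX x) = J4.
Proof.
apply/matrixP => i j; rewrite CmE !mxE.
ord4 i; ord4 j; rewrite /= ?addn0; ring.
Qed.

Lemma hY_iso x : Cm (hY x) (hY x) = J4.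
Proof.
apply/matrixP => i j; rewrite CmE !mxE.
ord4 i; ord4 j; rewrite /= ?addn0; ring.
Qed.

Lemma one_iso : Cm 1%:M 1%:M = J4.
Proof. by rewrite /Cm trmx1 mulmx1 mul1mx. Qed.

Lemma quad2 (u v : 'rV[F]_4) (M : 'M[F]_4) :
  u 0 o2 = 0 -> u 0 o3 = 0 -> v 0 o2 = 0 -> v 0 o3 = 0 ->
  (u *m (M - J4) *m v^T) 0 0 = u 0 o0 * M o0 o0 * v 0 o0 + u 0 o0 * M o0 o1 * v 0 o1
     + u 0 o1 * M o1 o0 * v 0 o0 + u 0 o1 * M o1 o1 * v 0 o1.
Proof.
move=> h1 h2 h3 h4; rewrite !mxE sum4 !mxE !sum4 !mxE /= h1 h2 h3 h4; ring.
Qed.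

Lemma size_pos i : (0 < size (a i))%N.
Proof. by case: (ha i). Qed.

Definition j0 i : 'I_(size (a i)) := Ordinal (size_pos i).
Definition Dh i := Dsum i (j0 i).

Lemma Dh_pos i : (0 < Dh i)%N.
Proof.
rewrite /Dh /Dsum (bigD1 (Ordinal (size_pos i))) //=.
case: (ha i) => _ [hp _].
have : (0 < nth 0%N (a i) 0)%N.
  by move: hp; case: (a i) (size_pos i) => //= x s _ /andP [].
by move=> hx; rewrite ltn_addr.
Qed.

Lemma Dh_le i : (Dh i <= n)%N.
Proof. exact: Dsum_le. Qed.

Lemma from_eq (x y x' y' : F) : x = y -> x' = x -> y = y' -> x' = y'.
Proof. by move=> -> -> ->. Qed.

Lemma eq_comb (x y z c : F) : x = y -> z = c * (x - y) -> z = 0.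
Proof. by move=> -> ->; rewrite subrr mulr0. Qed.

Lemma eq_comb2 (x1 y1 x2 y2 z c1 c2 : F) :
  x1 = y1 -> x2 = y2 -> z = c1 * (x1 - y1) + c2 * (x2 - y2) -> z = 0.
Proof. by move=> -> -> ->; rewrite !subrr !mulr0 addr0. Qed.

Lemma prod0 (x y : F) : x != 0 -> x * y = 0 -> y = 0.
Proof. by move=> hx /eqP; rewrite mulf_eq0 (negbTE hx) => /eqP. Qed.

Lemma neq_sub (x y : F) : x != y -> x - y != 0.
Proof. by rewrite subr_eq0. Qed.

Lemma threeB (t1 t2 t3 : F) : (2%:R : F) != 0 ->
  let R t s := t ^+ 2 * (s - 1) ^+ 2 = s ^+ 2 * (t - 1) ^+ 2 in
  t1 != t2 -> t1 != t3 -> t2 != t3 -> R t1 t2 -> R t1 t3 -> R t2 t3 -> False.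
Proof.
move=> h2 R h12 h13 h23 r12 r13 r23.
have g : forall u v, u != v -> R u v -> 2%:R * u * v - u - v = 0.
  move=> u v huv ruv; apply: (prod0 (v - u)); first by rewrite neq_sub // eq_sym.
  by apply: (eq_comb _ _ _ 1 ruv); ring.
have g12 := g _ _ h12 r12; have g13 := g _ _ h13 r13; have g23 := g _ _ h23 r23.
have a1 : 2%:R * t1 - 1 = 0.
  apply: (prod0 (t2 - t3)); first by rewrite neq_sub.
  by apply: (eq_comb2 _ _ _ _ _ 1 (-1) g12 g13); ring.
have a2 : 2%:R * t2 - 1 = 0.
  apply: (prod0 (t1 - t3)); first by rewrite neq_sub.
  by apply: (eq_comb2 _ _ _ _ _ 1 (-1) g12 g23); ring.
have : 2%:R * (t1 - t2) = 0 by apply: (eq_comb2 _ _ _ _ _ 1 (-1) a1 a2); ring.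
by move/(prod0 _ _ h2)/eqP; rewrite subr_eq0 (negbTE h12).
Qed.

Lemma threeC (t1 t2 t3 : F) :
  let R t s := t * (1 - t) * (1 + s) ^+ 2 = s * (1 - s) * (1 + t) ^+ 2 in
  t1 != t2 -> t1 != t3 -> t2 != t3 -> R t1 t2 -> R t1 t3 -> R t2 t3 -> False.
Proof.
move=> R h12 h13 h23 r12 r13 r23.
have g : forall u v, u != v -> R u v -> 3%:R * u * v + u + v - 1 = 0.
  move=> u v huv ruv; apply: (prod0 (v - u)); first by rewrite neq_sub // eq_sym.
  by apply: (eq_comb _ _ _ 1 ruv); ring.
have g12 := g _ _ h12 r12; have g13 := g _ _ h13 r13; have g23 := g _ _ h23 r23.
have a1 : 3%:R * t1 + 1 = 0.
  apply: (prod0 (t2 - t3)); first by rewrite neq_sub.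
  by apply: (eq_comb2 _ _ _ _ _ 1 (-1) g12 g13); ring.
have a2 : 3%:R * t2 + 1 = 0.
  apply: (prod0 (t1 - t3)); first by rewrite neq_sub.
  by apply: (eq_comb2 _ _ _ _ _ 1 (-1) g12 g23); ring.
have h3 : (3%:R : F) != 0.
  apply/eqP => e; move: a1; rewrite e mul0r add0r => /eqP; rewrite oner_eq0.
  by [].
have : 3%:R * (t1 - t2) = 0 by apply: (eq_comb2 _ _ _ _ _ 1 (-1) a1 a2); ring.
by move/(prod0 _ _ h3)/eqP; rewrite subr_eq0 (negbTE h12).
Qed.

Section Cases.
Variables i1 i2 i3 i4 : 'I_k.
Hypotheses (d12 : i1 != i2) (d13 : i1 != i3) (d14 : i1 != i4)
  (d23 : i2 != i3) (d24 : i2 != i4) (d34 : i3 != i4).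

Definition hh (t : F) (i : 'I_k) : 'M[F]_4 :=
  if i == i1 then hX t else if i == i2 then hY 0 else if i == i3 then hY 1
  else if i == i4 then hX (-1) else 1%:M.

Lemma hh1 t : hh t i1 = hX t. Proof. by rewrite /hh eqxx. Qed.
Lemma hh2 t : hh t i2 = hY 0. Proof. by rewrite /hh eq_sym (negbTE d12) eqxx. Qed.
Lemma hh3 t : hh t i3 = hY 1.
Proof. by rewrite /hh eq_sym (negbTE d13) eq_sym (negbTE d23) eqxx. Qed.
Lemma hh4 t : hh t i4 = hX (-1).
Proof. by rewrite /hh eq_sym (negbTE d14) eq_sym (negbTE d24) eq_sym (negbTE d34) eqxx. Qed.

Lemma hh_iso t i : Cm (hh t i) (hh t i) = J4.
Proof.
rewrite /hh; repeat case: ifP => _; by rewrite ?hX_iso ?hY_iso ?one_iso.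
Qed.

Lemma io0 i : (iota o0 < Dh i)%N. Proof. exact: Dh_pos. Qed.

Lemma caseA : (Dh i2 < n)%N -> (Dh i3 < n)%N ->
  (forall s : seq F, exists x, x \notin s) -> (2%:R : F) != 0 ->
  ~ finitely_many_orbits F n a.
Proof.
move=> S2 S3 hinf h2.
apply: (reduction hh (fun t s => t = s) hinf hh_iso); last first.
  by move=> t1 t2 t3 /eqP.
move=> t s g hg ho.
have V := vert (hh t) (hh s) g ho.
have Z := vert_zero (hh t) (hh s) g.
have Ed := edge (hh t) (hh s) g hg.
have [u1 V1] := V i1 (j0 i1) o0 (io0 i1).
have [u2 V2] := V i2 (j0 i2) o0 (io0 i2).
have [u3 V3] := V i3 (j0 i3) o0 (io0 i3).
have [u4 V4] := V i4 (j0 i4) o0 (io0 i4).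
have [z12 z13 _] := Z _ _ _ _ (Dh_le i1) V1.
have [z22 z23 z21] := Z _ _ _ _ (Dh_le i2) V2.
have [z32 z33 z31] := Z _ _ _ _ (Dh_le i3) V3.
have [z42 z43 _] := Z _ _ _ _ (Dh_le i4) V4.
have E12 := Ed _ _ _ _ _ _ _ _ (Dh_le i1) (Dh_le i2) V1 V2.
have E13 := Ed _ _ _ _ _ _ _ _ (Dh_le i1) (Dh_le i3) V1 V3.
have E24 := Ed _ _ _ _ _ _ _ _ (Dh_le i2) (Dh_le i4) V2 V4.
have E34 := Ed _ _ _ _ _ _ _ _ (Dh_le i3) (Dh_le i4) V3 V4.
rewrite quad2 // !hh1 !hh2 !CmE !mxE /= (z21 S2) in E12.
rewrite quad2 // !hh1 !hh3 !CmE !mxE /= (z31 S3) in E13.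
rewrite quad2 // !hh2 !hh4 !CmE !mxE /= (z21 S2) in E24.
rewrite quad2 // !hh3 !hh4 !CmE !mxE /= (z31 S3) in E34.
move: E12 E13 E24 E34.
set U1 := u1 0 o0; set U2 := u2 0 o0; set U3 := u3 0 o0; set U4 := u4 0 o0.
set W1 := u1 0 o1; set W4 := u4 0 o1.
move=> E12 E13 E24 E34.
have e12 : t = U1 * U2 * s.
  by apply: (from_eq _ _ _ _ E12); ring.
have e13 : t - 1 = U1 * U3 * (s - 1).
  by apply: (from_eq _ _ _ _ E13); ring.
have e24 : U2 * U4 = 1.
  apply/eqP; rewrite -subr_eq0; apply/eqP.
  by apply: (eq_comb _ _ _ 1 E24); ring.
have e34 : 2%:R * (U3 * U4 - 1) = 0.
  by apply: (eq_comb _ _ _ 1 E34); ring.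
have e34' : U3 * U4 = 1.
  by apply/eqP; rewrite -subr_eq0; move/eqP: e34; rewrite mulf_eq0 (negbTE h2).
have eU : U2 = U3 by rewrite -[U2]mulr1 -e34' mulrCA e24 mulr1.
rewrite -eU in e13.
have e1 : U1 * U2 - 1 = 0.
  by apply: (eq_comb _ _ _ 1 e13); rewrite e12; ring.
by rewrite e12 -[RHS]mul1r; congr (_ * _); apply/eqP; rewrite -subr_eq0 e1.
Qed.

Lemma caseB : Dh i1 = n -> Dh i2 = n -> Dh i3 = n -> Dh i4 = n ->
  (forall s : seq F, exists x, x \notin s) -> (2%:R : F) != 0 ->
  ~ finitely_many_orbits F n a.
Proof.
move=> L1 L2 L3 L4 hinf h2.
have io1 : forall i, Dh i = n -> (iota o1 < Dh i)%N by move=> i ->; rewrite /iota /=; lia.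
apply: (reduction hh (fun t s => t ^+ 2 * (s - 1) ^+ 2 = s ^+ 2 * (t - 1) ^+ 2) hinf hh_iso); last first.
  by move=> t1 t2 t3; apply: threeB.
move=> t s g hg ho.
have V := vert (hh t) (hh s) g ho.
have Z := vert_zero (hh t) (hh s) g.
have Ed := edge (hh t) (hh s) g hg.
have [y10 V10] := V i1 (j0 i1) o0 (io0 i1).
have [zz102 zz103 _] := Z _ _ _ _ (Dh_le i1) V10.
have [y11 V11] := V i1 (j0 i1) o1 (io1 i1 L1).
have [zz112 zz113 _] := Z _ _ _ _ (Dh_le i1) V11.
have [y20 V20] := V i2 (j0 i2) o0 (io0 i2).
have [zz202 zz203 _] := Z _ _ _ _ (Dh_le i2) V20.
have [y21 V21] := V i2 (j0 i2) o1 (io1 i2 L2).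
have [zz212 zz213 _] := Z _ _ _ _ (Dh_le i2) V21.
have [y30 V30] := V i3 (j0 i3) o0 (io0 i3).
have [zz302 zz303 _] := Z _ _ _ _ (Dh_le i3) V30.
have [y31 V31] := V i3 (j0 i3) o1 (io1 i3 L3).
have [zz312 zz313 _] := Z _ _ _ _ (Dh_le i3) V31.
have [y40 V40] := V i4 (j0 i4) o0 (io0 i4).
have [zz402 zz403 _] := Z _ _ _ _ (Dh_le i4) V40.
have [y41 V41] := V i4 (j0 i4) o1 (io1 i4 L4).
have [zz412 zz413 _] := Z _ _ _ _ (Dh_le i4) V41.
have E1200 := Ed _ _ _ _ _ _ _ _ (Dh_le i1) (Dh_le i2) V10 V20.
rewrite quad2 // in E1200.
have E1201 := Ed _ _ _ _ _ _ _ _ (Dh_le i1) (Dh_le i2) V10 V21.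
rewrite quad2 // in E1201.
have E1210 := Ed _ _ _ _ _ _ _ _ (Dh_le i1) (Dh_le i2) V11 V20.
rewrite quad2 // in E1210.
have E1211 := Ed _ _ _ _ _ _ _ _ (Dh_le i1) (Dh_le i2) V11 V21.
rewrite quad2 // in E1211.
have E3400 := Ed _ _ _ _ _ _ _ _ (Dh_le i3) (Dh_le i4) V30 V40.
rewrite quad2 // in E3400.
have E3401 := Ed _ _ _ _ _ _ _ _ (Dh_le i3) (Dh_le i4) V30 V41.
rewrite quad2 // in E3401.
have E3410 := Ed _ _ _ _ _ _ _ _ (Dh_le i3) (Dh_le i4) V31 V40.
rewrite quad2 // in E3410.
have E3411 := Ed _ _ _ _ _ _ _ _ (Dh_le i3) (Dh_le i4) V31 V41.
rewrite quad2 // in E3411.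
have E1300 := Ed _ _ _ _ _ _ _ _ (Dh_le i1) (Dh_le i3) V10 V30.
rewrite quad2 // in E1300.
have E1301 := Ed _ _ _ _ _ _ _ _ (Dh_le i1) (Dh_le i3) V10 V31.
rewrite quad2 // in E1301.
have E1310 := Ed _ _ _ _ _ _ _ _ (Dh_le i1) (Dh_le i3) V11 V30.
rewrite quad2 // in E1310.
have E1311 := Ed _ _ _ _ _ _ _ _ (Dh_le i1) (Dh_le i3) V11 V31.
rewrite quad2 // in E1311.
have E2400 := Ed _ _ _ _ _ _ _ _ (Dh_le i2) (Dh_le i4) V20 V40.
rewrite quad2 // in E2400.
have E2401 := Ed _ _ _ _ _ _ _ _ (Dh_le i2) (Dh_le i4) V20 V41.
rewrite quad2 // in E2401.
have E2410 := Ed _ _ _ _ _ _ _ _ (Dh_le i2) (Dh_le i4) V21 V40.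
rewrite quad2 // in E2410.
have E2411 := Ed _ _ _ _ _ _ _ _ (Dh_le i2) (Dh_le i4) V21 V41.
rewrite quad2 // in E2411.
have key : (Cm (hh t i1) (hh t i2) o0 o0 * Cm (hh t i1) (hh t i2) o1 o1 - Cm (hh t i1) (hh t i2) o0 o1 * Cm (hh t i1) (hh t i2) o1 o0) * (Cm (hh t i3) (hh t i4) o0 o0 * Cm (hh t i3) (hh t i4) o1 o1 - Cm (hh t i3) (hh t i4) o0 o1 * Cm (hh t i3) (hh t i4) o1 o0) * (Cm (hh s i1) (hh s i3) o0 o0 * Cm (hh s i1) (hh s i3) o1 o1 - Cm (hh s i1) (hh s i3) o0 o1 * Cm (hh s i1) (hh s i3) o1 o0) * (Cm (hh s i2) (hh s i4) o0 o0 * Cm (hh s i2) (hh s i4) o1 o1 - Cm (hh s i2) (hh s i4) o0 o1 * Cm (hh s i2) (hh s i4) o1 o0) = (Cm (hh s i1) (hh s i2) o0 o0 * Cm (hh s i1) (hh s i2) o1 o1 - Cm (hh s i1) (hh s i2) o0 o1 * Cm (hh s i1) (hh s i2) o1 o0) * (Cm (hh s i3) (hh s i4) o0 o0 * Cm (hh s i3) (hh s i4) o1 o1 - Cm (hh s i3) (hh s i4) o0 o1 * Cm (hh s i3) (hh s i4) o1 o0) * (Cm (hh t i1) (hh t i3) o0 o0 * Cm (hh t i1) (hh t i3) o1 o1 - Cm (hh t i1) (hh t i3) o0 o1 * Cm (hh t i1) (hh t i3) o1 o0) * (Cm (hh t i2) (hh t i4) o0 o0 * Cm (hh t i2) (hh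 t i4) o1 o1 - Cm (hh t i2) (hh t i4) o0 o1 * Cm (hh t i2) (hh t i4) o1 o0).
  rewrite E1200 E1201 E1210 E1211 E3400 E3401 E3410 E3411 E1300 E1301 E1310 E1311 E2400 E2401 E2410 E2411; ring.
rewrite !hh1 !hh2 !hh3 !hh4 !CmE !mxE /= in key.
have k2 : (2%:R * 2%:R) * (t ^+ 2 * (s - 1) ^+ 2 - s ^+ 2 * (t - 1) ^+ 2) = 0.
  by apply: (eq_comb _ _ _ 1 key); ring.
have h4 : (2%:R * 2%:R : F) != 0 by rewrite mulf_neq0.
by move: (prod0 _ _ h4 k2) => /eqP; rewrite subr_eq0 => /eqP.
Qed.

Lemma caseC : Dh i1 = n -> Dh i2 = n -> Dh i3 = n -> (Dh i4 < n)%N ->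
  (forall s : seq F, exists x, x \notin s) -> (2%:R : F) != 0 ->
  ~ finitely_many_orbits F n a.
Proof.
move=> L1 L2 L3 S4 hinf h2.
have io1 : forall i, Dh i = n -> (iota o1 < Dh i)%N by move=> i ->; rewrite /iota /=; lia.
apply: (reduction hh (fun t s => t * (1 - t) * (1 + s) ^+ 2 = s * (1 - s) * (1 + t) ^+ 2) hinf hh_iso); last first.
  by move=> t1 t2 t3; apply: threeC.
move=> t s g hg ho.
have V := vert (hh t) (hh s) g ho.
have Z := vert_zero (hh t) (hh s) g.
have Ed := edge (hh t) (hh s) g hg.
have [y10 V10] := V i1 (j0 i1) o0 (io0 i1).
have [zz102 zz103 _] := Z _ _ _ _ (Dh_le i1) V10.
have [y11 V11] := V i1 (j0 i1) o1 (io1 i1 L1).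
have [zz112 zz113 _] := Z _ _ _ _ (Dh_le i1) V11.
have [y20 V20] := V i2 (j0 i2) o0 (io0 i2).
have [zz202 zz203 _] := Z _ _ _ _ (Dh_le i2) V20.
have [y21 V21] := V i2 (j0 i2) o1 (io1 i2 L2).
have [zz212 zz213 _] := Z _ _ _ _ (Dh_le i2) V21.
have [y30 V30] := V i3 (j0 i3) o0 (io0 i3).
have [zz302 zz303 _] := Z _ _ _ _ (Dh_le i3) V30.
have [y31 V31] := V i3 (j0 i3) o1 (io1 i3 L3).
have [zz312 zz313 _] := Z _ _ _ _ (Dh_le i3) V31.
have [y40 V40] := V i4 (j0 i4) o0 (io0 i4).
have [zz402 zz403 zz401] := Z _ _ _ _ (Dh_le i4) V40.
have {}zz401 := zz401 S4.
have E1200 := Ed _ _ _ _ _ _ _ _ (Dh_le i1) (Dh_le i2) V10 V20.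
rewrite quad2 // in E1200.
have E1201 := Ed _ _ _ _ _ _ _ _ (Dh_le i1) (Dh_le i2) V10 V21.
rewrite quad2 // in E1201.
have E1210 := Ed _ _ _ _ _ _ _ _ (Dh_le i1) (Dh_le i2) V11 V20.
rewrite quad2 // in E1210.
have E1211 := Ed _ _ _ _ _ _ _ _ (Dh_le i1) (Dh_le i2) V11 V21.
rewrite quad2 // in E1211.
have E1300 := Ed _ _ _ _ _ _ _ _ (Dh_le i1) (Dh_le i3) V10 V30.
rewrite quad2 // in E1300.
have E1301 := Ed _ _ _ _ _ _ _ _ (Dh_le i1) (Dh_le i3) V10 V31.
rewrite quad2 // in E1301.
have E1310 := Ed _ _ _ _ _ _ _ _ (Dh_le i1) (Dh_le i3) V11 V30.
rewrite quad2 // in E1310.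
have E1311 := Ed _ _ _ _ _ _ _ _ (Dh_le i1) (Dh_le i3) V11 V31.
rewrite quad2 // in E1311.
have E2300 := Ed _ _ _ _ _ _ _ _ (Dh_le i2) (Dh_le i3) V20 V30.
rewrite quad2 // in E2300.
have E2301 := Ed _ _ _ _ _ _ _ _ (Dh_le i2) (Dh_le i3) V20 V31.
rewrite quad2 // in E2301.
have E2310 := Ed _ _ _ _ _ _ _ _ (Dh_le i2) (Dh_le i3) V21 V30.
rewrite quad2 // in E2310.
have E2311 := Ed _ _ _ _ _ _ _ _ (Dh_le i2) (Dh_le i3) V21 V31.
rewrite quad2 // in E2311.
have E1400 := Ed _ _ _ _ _ _ _ _ (Dh_le i1) (Dh_le i4) V10 V40.
rewrite quad2 // zz401 in E1400.
have E1410 := Ed _ _ _ _ _ _ _ _ (Dh_le i1) (Dh_le i4) V11 V40.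
rewrite quad2 // zz401 in E1410.
have E2400 := Ed _ _ _ _ _ _ _ _ (Dh_le i2) (Dh_le i4) V20 V40.
rewrite quad2 // zz401 in E2400.
have E2410 := Ed _ _ _ _ _ _ _ _ (Dh_le i2) (Dh_le i4) V21 V40.
rewrite quad2 // zz401 in E2410.
have E3400 := Ed _ _ _ _ _ _ _ _ (Dh_le i3) (Dh_le i4) V30 V40.
rewrite quad2 // zz401 in E3400.
have E3410 := Ed _ _ _ _ _ _ _ _ (Dh_le i3) (Dh_le i4) V31 V40.
rewrite quad2 // zz401 in E3410.
have key : (Cm (hh t i1) (hh t i2) o1 o0 * Cm (hh t i2) (hh t i4) o1 o0 - Cm (hh t i1) (hh t i2) o1 o1 * Cm (hh t i2) (hh t i4) o0 o0) * (Cm (hh t i1) (hh t i3) o1 o0 * Cm (hh t i3) (hh t i4) o1 o0 - Cm (hh t i1) (hh t i3) o1 o1 * Cm (hh t i3) (hh t i4) o0 o0) * (Cm (hh s i1) (hh s i4) o1 o0 ^+ 2) * (Cm (hh s i2) (hh s i3) o0 o0 * Cm (hh s i2) (hh s i3) o1 o1 - Cm (hh s i2) (hh s i3) o0 o1 * Cm (hh s i2) (hh s i3) o1 o0) = (Cm (hh s i1) (hh s i2) o1 o0 * Cm (hh s i2) (hh s i4) o1 o0 - Cm (hh s i1) (hh s i2) o1 o1 * Cm (hh s i2) (hh s i4) o0 o0) * (Cm (hh s i1) (hh s i3) o1 o0 * Cm (hh s i3) (hh s i4) o1 o0 - Cm (hh s i1) (hh s i3) o1 o1 * Cm (hh s i3)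 (hh s i4) o0 o0) * (Cm (hh t i1) (hh t i4) o1 o0 ^+ 2) * (Cm (hh t i2) (hh t i3) o0 o0 * Cm (hh t i2) (hh t i3) o1 o1 - Cm (hh t i2) (hh t i3) o0 o1 * Cm (hh t i2) (hh t i3) o1 o0).
  rewrite ?E1200 ?E1201 ?E1210 ?E1211 ?E1300 ?E1301 ?E1310 ?E1311 ?E2300 ?E2301 ?E2310 ?E2311 ?E1400 ?E1410 ?E2400 ?E2410 ?E3400 ?E3410.
  rewrite !hh1 !hh2 !hh3 !hh4 !CmE !mxE /=; ring.
rewrite !hh1 !hh2 !hh3 !hh4 !CmE !mxE /= in key.
have k2 : (- 2%:R) * (t * (1 - t) * (1 + s) ^+ 2 - s * (1 - s) * (1 + t) ^+ 2) = 0.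
  by apply: (eq_comb _ _ _ 1 key); ring.
have h4 : (- 2%:R : F) != 0 by rewrite oppr_eq0.
by move: (prod0 _ _ h4 k2) => /eqP; rewrite subr_eq0 => /eqP.
Qed.

End Cases.

End Work.

Theorem proposition1p2 (F : fieldType)
  (F_infinite : forall s : seq F, exists x : F, x \notin s)
  (F_char : (2%:R : F) != 0)
  (n k : nat) (hn : (2 <= n)%N) (hk : (4 <= k)%N)
  (a : 'I_k -> seq nat) (ha : forall i : 'I_k, admissible n (a i)) :
  ~ finitely_many_orbits F n a.
Proof.
have h0 : (0 < k)%N by lia.
have h1 : (1 < k)%N by lia.
have h2 : (2 < k)%N by lia.
have h3 : (3 < k)%N by lia.
pose i0 := Ordinal h0; pose i1 := Ordinal h1; pose i2 := Ordinal h2; pose i3 := Ordinal h3.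
have T : forall i, Dh n k a ha i = n \/ (Dh n k a ha i < n)%N.
  by move=> i; have := Dh_le n k a ha i; rewrite leq_eqVlt => /orP [/eqP|]; [left|right].
case: (T i0) => t0; case: (T i1) => t1; case: (T i2) => t2; case: (T i3) => t3.
- by apply: (caseB F n hn k a ha i0 i1 i2 i3).
- by apply: (caseC F n hn k a ha i0 i1 i2 i3).
- by apply: (caseC F n hn k a ha i0 i1 i3 i2).
- by apply: (caseA F n hn k a ha i0 i2 i3 i1).
- by apply: (caseC F n hn k a ha i0 i2 i3 i1).
- by apply: (caseA F n hn k a ha i0 i1 i3 i2).
- by apply: (caseA F n hn k a ha i0 i1 i2 i3).
- by apply: (caseA F n hn k a ha i0 i1 i2 i3).
- by apply: (caseC F n hn k a ha i1 i2 i3 i0).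
- by apply: (caseA F n hn k a ha i1 i0 i3 i2).
- by apply: (caseA F n hn k a ha i1 i0 i2 i3).
- by apply: (caseA F n hn k a ha i1 i0 i2 i3).
- by apply: (caseA F n hn k a ha i2 i0 i1 i3).
- by apply: (caseA F n hn k a ha i2 i0 i1 i3).
- by apply: (caseA F n hn k a ha i2 i0 i1 i3).
- by apply: (caseA F n hn k a ha i2 i0 i1 i3).
Qed.
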